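(* Let $\mathfrak{G}=(Y,R,E)$ be a descriptive $\mathsf{MS4}$-frame, $\rho\mathfrak{G}=(X,R',Q')$ its skeleton and $\pi:Y\to X$ the quotient map. Then (1) $\pi^{-1}[\max X]=\operatorname{qmax}Y$; (2) $\pi^{-1}[E_{Q'}[A]]=E_Q[\pi^{-1}[A]]$ for every $A\subseteq X$; (3) $\pi^{-1}[E_{Q'}[\max X]]=E_Q[\operatorname{qmax}Y]$.
   Context: A descriptive $\mathsf{MS4}$-frame is $(Y,R,E)$ with $Y$ a Stone space, $R$ a continuous quasi-order, $E$ a continuous equivalence relation (continuous: $R[x]=\{y:xRy\}$ closed for all $x$, $R^{-1}[U]$ clopen for clopen $U$), such that $xEy$, $yRz$ imply $\exists u$ with $xRu$, $uEz$. $Q=E\circ R$: $xQy$ iff $\exists z$ with $xRz$, $zEy$. Skeleton: with $xE_Ry$ iff $xRy$ and $yRx$, $X=Y/E_R$, $\pi$ the quotient map, $\pi(x)R'\pi(y)$ iff $xRy$, $\pi(x)Q'\pi(y)$ iff $xQy$. For a quasi-order $S$, $E_S$ is the equivalence $xE_Sy$ iff $xSy$ and $ySx$; $S[A]=\{y:\exists a\in A,\ aSy\}$. $\max X=\{x: xR'y\Rightarrow x=y\}$, $\operatorname{qmax}Y=\{x: xRy\Rightarrow yRx\}$. *)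

(* Defs.v *)
From mathcomp Require Import all_boot all_order.
From mathcomp Require Import all_classical all_reals all_analysis.
Unset Printing Implicit Defensive.
Local Open Scope classical_set_scope.

Definition stone_space (Y : topologicalType) : Prop :=
  [/\ compact [set: Y], hausdorff_space Y & zero_dimensional Y].

Definition quasi_order {T : Type} (S : T -> T -> Prop) : Prop :=
  (forall x, S x x) /\ (forall x y z, S x y -> S y z -> S x z).

Definition equivalence_rel {T : Type} (S : T -> T -> Prop) : Prop :=
  (forall x, S x x) /\ (forall x y, S x y -> S y x) /\
  (forall x y z, S x y -> S y z -> S x z).

Definition rimg {T : Type} (S : T -> T -> Prop) (A : set T) : set T :=
  [set y | exists2 a, A a & S a y].

Definition rpreimg {T : Type} (S : T -> T -> Prop) (U : set T) : set T :=
  [set x | exists2 y, U y & S x y].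

Definition continuous_rel {Y : topologicalType} (S : Y -> Y -> Prop) : Prop :=
  (forall x, closed [set y | S x y]) /\
  (forall U : set Y, clopen U -> clopen (rpreimg S U)).

Definition E_of {T : Type} (S : T -> T -> Prop) (x y : T) : Prop := S x y /\ S y x.

Definition descriptive_MS4_frame (Y : topologicalType) (R E : Y -> Y -> Prop) : Prop :=
  stone_space Y /\ quasi_order R /\ continuous_rel R /\
  equivalence_rel E /\ continuous_rel E /\
  (forall x y z, E x y -> R y z -> exists u, R x u /\ E u z).

Definition Qrel {Y : Type} (R E : Y -> Y -> Prop) (x y : Y) : Prop :=
  exists z, R x z /\ E z y.

(* Skeleton carrier X = Y / E_R, realised as the set of E_R-classes *)
Definition skel {Y : Type} (R : Y -> Y -> Prop) : Type :=
  {A : set Y | exists y, A = E_of R y}.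

Definition skel_pi {Y : Type} (R : Y -> Y -> Prop) (y : Y) : skel R :=
  exist _ (E_of R y) (ex_intro _ y erefl).

Definition skel_lift {Y : Type} (R : Y -> Y -> Prop) (S : Y -> Y -> Prop)
  (x x' : skel R) : Prop :=
  exists a b, x = skel_pi R a /\ x' = skel_pi R b /\ S a b.

Definition skel_R {Y : Type} (R : Y -> Y -> Prop) : skel R -> skel R -> Prop :=
  skel_lift R R.

Definition skel_Q {Y : Type} (R E : Y -> Y -> Prop) : skel R -> skel R -> Prop :=
  skel_lift R (Qrel R E).

Definition maxX {Y : Type} (R : Y -> Y -> Prop) : set (skel R) :=
  [set x | forall y, skel_R R x y -> x = y].

Definition qmax {Y : Type} (R : Y -> Y -> Prop) : set Y :=
  [set x | forall y, R x y -> R y x].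

(* Main.v *)
Require Import Defs.
From mathcomp Require Import all_boot all_order.
From mathcomp Require Import all_classical all_reals all_analysis.
Local Open Scope classical_set_scope.

Section H.
Context {Y : Type} (R E : Y -> Y -> Prop).
Hypothesis qo : quasi_order R.
Hypothesis ms : forall x y z, E x y -> R y z -> exists u, R x u /\ E u z.

Lemma pi_eq a b : R a b -> R b a -> skel_pi R a = skel_pi R b.
Proof.
move=> ab ba; apply: eq_sig_hprop => [x p q|]; first exact: Prop_irrelevance.
rewrite /=; apply: funext => y; apply: propext; rewrite /E_of.
case: qo => _ tr; split=> -[h1 h2]; split; eauto.
Qed.

Lemma pi_eqE a b : skel_pi R a = skel_pi R b -> R a b /\ R b a.
Proof.
move=> /(congr1 (@proj1_sig _ _)) /= h.
case: qo => rf _.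
have : E_of R a a by split; apply: rf.
by rewrite h => -[].
Qed.

Lemma skel_surj (x : skel R) : exists b, x = skel_pi R b.
Proof.
case: x => A [b hb]; exists b; apply: eq_sig_hprop => [x p q|//].
exact: Prop_irrelevance.
Qed.

Lemma skelR_iff a b : skel_R R (skel_pi R a) (skel_pi R b) <-> R a b.
Proof.
split; last by move=> h; exists a, b.
move=> [a' [b' [/pi_eqE [h1 h2] [/pi_eqE [h3 h4] h]]]].
case: qo => _ tr; eauto.
Qed.

Lemma skelQ_iff a b : skel_Q R E (skel_pi R a) (skel_pi R b) <-> Qrel R E a b.
Proof.
split; last by move=> h; exists a, b.
move=> [a' [b' [/pi_eqE [h1 h2] [/pi_eqE [h3 h4] [z [h5 h6]]]]]].
case: qo => _ tr.
have [u [zu ub]] := ms _ _ _ h6 h4.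
exists u; split; eauto.
Qed.

End H.

Theorem lemma3p11 (Y : topologicalType) (R E : Y -> Y -> Prop) :
  descriptive_MS4_frame Y R E ->
  [/\ skel_pi R @^-1` maxX R = qmax R,
      (forall A : set (skel R),
         skel_pi R @^-1` rimg (E_of (skel_Q R E)) A =
         rimg (E_of (Qrel R E)) (skel_pi R @^-1` A)) &
      skel_pi R @^-1` rimg (E_of (skel_Q R E)) (maxX R) =
      rimg (E_of (Qrel R E)) (qmax R)].
Proof.
move=> [_ [qo [_ [_ [_ ms]]]]].
have h1 : skel_pi R @^-1` maxX R = qmax R.
  apply: funext => a; apply: propext; rewrite /maxX /qmax /=; split.
  - move=> h b ab; have := h (skel_pi R b) (proj2 (skelR_iff _ qo a b) ab).
    by move=> /(pi_eqE _ qo) [].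
  - move=> h y; have [b ->] := skel_surj _ y.
    move=> /(skelR_iff _ qo) ab; exact: pi_eq _ qo _ _ ab (h _ ab).
have h2 : forall A : set (skel R),
         skel_pi R @^-1` rimg (E_of (skel_Q R E)) A =
         rimg (E_of (Qrel R E)) (skel_pi R @^-1` A).
  move=> A; apply: funext => a; apply: propext; rewrite /rimg /=; split.
  - move=> [x Ax [q1 q2]]; have [b eb] := skel_surj _ x; subst x.
    exists b; first exact: Ax.
    by split; apply/(skelQ_iff _ _ qo ms).
  - move=> [b Ab [q1 q2]]; exists (skel_pi R b); first exact: Ab.
    by split; apply/(skelQ_iff _ _ qo ms).
split; [exact: h1|exact: h2|]. by rewrite h2 h1.
Qed.
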